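(* For $n\in\mathbb{N}$: (1) if $n\in\{1,2\}$ then $c(n)=\lceil\log_2 n\rceil+1$ and $h(n)=\lceil\log_2 n\rceil$; (2) if $n\ge3$ then $c(n)\le\lceil\log_2 n\rceil$ and $h(n)\le\lceil\log_2 n\rceil-1$, and equality holds for infinitely many $n\ge 3$.
   Context: For $i\in\mathbb{N}$, $m\in\mathbb{N}_0$ let $d_i(m)=2^{i-1}-|(m\bmod 2^i)-2^{i-1}|$, and let $c(n)$ be the number of distinct values in $\{d_i(n):i\in\mathbb{N}\}$. For $k\ge0$, $0\le m<2^k$ let $\beta_k(m)\in\{0,1\}^k$ have $j$-th coordinate equal to the binary digit of $m$ of weight $2^{k-j}$. For $n\ge2$, $k=\lceil\log_2 n\rceil$, a pair $(n_0,n_1)$ with $n=n_0+n_1$, $n_0\ge n_1\ge1$ is a hypercubic bipartition (HCBP) of $n$ if for some $i\in\{1,\dots,k\}$ the hyperplane $x_i=1/2$ splits $\beta_k(0),\dots,\beta_k(n-1)$ into $n_0$ points on one side and $n_1$ on the other. For $n\ge2$, $h(n)$ is the number of HCBPs of $n$; $h(1)=0$. *)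

(* Defs.v *)
From mathcomp Require Import all_boot.
Set Implicit Arguments. Unset Strict Implicit. Unset Printing Implicit Defensive.

(* |a - b| on naturals (exact: one of the two truncated differences is 0). *)
Definition absdiff (a b : nat) : nat := (a - b) + (b - a).

Definition d (i m : nat) : nat := 2 ^ i.-1 - absdiff (m %% 2 ^ i) (2 ^ i.-1).

(* c(n) = number of distinct values of d_i(n), i >= 1.
   For i >= n+1 one has d_i(n) = n = d_(n+1)(n), so the indices 1..n+1
   already produce every value (see lemma d_in_range below). *)
Definition c (n : nat) : nat := size (undup [seq d i n | i <- iota 1 n.+1]).

Lemma d_large (i n : nat) : n.+1 <= i -> d i n = n.
Proof.
move=> hi.
have h1 : n < 2 ^ i.-1.
  apply: (leq_trans (ltn_expl n (leqnn 2))).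
  by rewrite leq_exp2l // -ltnS prednK // (leq_trans _ hi).
have h2 : n < 2 ^ i.
  apply: (leq_trans h1); rewrite leq_exp2l //; exact: leq_pred.
rewrite /d modn_small // /absdiff.
have -> : n - 2 ^ i.-1 = 0 by apply/eqP; rewrite subn_eq0 ltnW.
by rewrite add0n subKn // ltnW.
Qed.

Lemma d_in_range (n i : nat) : 1 <= i ->
  d i n \in [seq d j n | j <- iota 1 n.+1].
Proof.
move=> hi; case: (leqP i n.+1) => hin.
  apply/mapP; exists i => //.
  by rewrite mem_iota hi /= add1n ltnS.
rewrite d_large; last exact: ltnW.
apply/mapP; exists n.+1; last by rewrite d_large.
by rewrite mem_iota /= add1n ltnS.
Qed.

Definition beta (k m j : nat) : bool := odd (m %/ 2 ^ (k - j)).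

(* number of the points beta_k(0),...,beta_k(n-1) with coordinate j equal to 1
   (i.e. on the side x_j > 1/2 of the hyperplane x_j = 1/2) *)
Definition side1 (k n j : nat) : nat := count (fun m => beta k m j) (iota 0 n).

Definition HCBP (n n0 n1 : nat) : bool :=
  let k := up_log 2 n in
  [&& n0 + n1 == n, n1 <= n0, 0 < n1 &
      has (fun j => let s := side1 k n j in
                    ((s == n0) && (n - s == n1)) || ((s == n1) && (n - s == n0)))
          (iota 1 k)].

Definition h (n : nat) : nat :=
  if n < 2 then 0
  else size [seq p <- [seq (a, b) | a <- iota 0 n.+1, b <- iota 0 n.+1]
            | HCBP n p.1 p.2].

(* Main.v *)
Require Import Defs.
From mathcomp Require Import all_boot zify.


Lemma dsmall n : d 1 n = d 2 n \/ (n %% 4 = 2 /\ d 2 n = d 3 n).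
Proof.
rewrite /d /absdiff /=.
have h8 := ltn_pmod n (isT : 0 < 8).
have e4 : n %% 4 = (n %% 8) %% 4 by rewrite modn_dvdm.
have e2 : n %% 2 = (n %% 8) %% 2 by rewrite modn_dvdm.
rewrite e4 e2.
move: (n %% 8) h8 => r; case: r => [|[|[|[|[|[|[|[|r]]]]]]]] //=; try by [left|right].
Qed.

Lemma key b n : 2 * count (fun m => odd (m %/ 2 ^ b)) (iota 0 n) + d b.+1 n = n.
Proof.
have M0 : 0 < 2 ^ b by rewrite expn_gt0.
elim: n => [|n IH].
  rewrite /d /absdiff mod0n /=; lia.
rewrite -(addn1 n) iotaD count_cat /= add0n addn0.
move: IH; rewrite /d /absdiff /= expnS.
set M := 2 ^ b.
have hodd : odd (n %/ M) = (M <= n %% (2 * M)).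
  have -> : odd (n %/ M) = (n %/ M %% 2 == 1) by rewrite modn2; case: odd.
  rewrite modn_divl.
  have hr : n %% (2 * M) < 2 * M by rewrite ltn_pmod // muln_gt0.
  case: leqP => hM.
    have : (n %% (2*M)) %/ M = 1.
      apply/eqP; rewrite eqn_leq -ltnS ltn_divLR // divn_gt0 // hM andbT.
      move: hr hM; set r := n %% (2 * M); clearbody r; clear; lia.
    by move=> ->.
  by rewrite divn_small.
rewrite hodd.
have hr : n %% (2 * M) < 2 * M by rewrite ltn_pmod // muln_gt0.
have hS : (n + 1) %% (2 * M) = if n %% (2 * M) + 1 == 2 * M then 0 else n %% (2 * M) + 1.
  rewrite -modnDml; case: eqP => [->|ne]; first by rewrite modnn.
  rewrite modn_small //; move: hr ne; set r := n %% (2 * M); clearbody r; clear; lia.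
rewrite hS; move: hr; set r := n %% (2 * M); clearbody r.
set C := count _ _; clearbody C.
clear hS hodd; clearbody M; case: eqP => E; case: leqP => H /=; clear M0; lia.
Qed.


Fixpoint F t := if t is t'.+1 then 4 * F t' + 1 else 1.

Lemma F3 t : 3 * F t + 1 = 4 ^ t.+1.
Proof. elim: t => [//|t IH] /=; rewrite expnS -IH; lia. Qed.

Lemma Fdec t j : t <= j -> exists x, F j = F t + 4 ^ t.+1 * x.
Proof.
move=> /subnK <-; elim: (j - t) => [|m [x IH]]; first by exists 0; rewrite muln0 addn0.
exists (1 + 4 * x); rewrite addSn /= IH.
have := F3 t; move: (F t) (4 ^ t.+1) => a P; lia.
Qed.

Lemma dodd t j : t <= j -> d (t.*2.+1) (F j) = 2 * 4 ^ t - F t.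
Proof.
move=> htj; have [x ->] := Fdec t j htj.
have h3 := F3 t; rewrite expnS in h3.
have P0 : 0 < 4 ^ t by rewrite expn_gt0.
rewrite /d /= -mul2n.
have E1 : 2 ^ (2 * t) = 4 ^ t by rewrite expnM.
have E2 : 2 ^ (2 * t).+1 = 2 * 4 ^ t by rewrite expnS E1.
rewrite E2 E1 expnS.
have -> : F t + 4 * 4 ^ t * x = (2 * x) * (2 * 4 ^ t) + F t by lia.
rewrite modnMDl modn_small; last by lia.
rewrite /absdiff; move: (F t) (4 ^ t) h3 P0 => a P; clear; lia.
Qed.

Lemma deven t j : t <= j -> d (t.*2.+2) (F j) = F t.
Proof.
move=> htj; have [x ->] := Fdec t j htj.
have h3 := F3 t; rewrite expnS in h3.
have P0 : 0 < 4 ^ t by rewrite expn_gt0.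
rewrite /d /= -mul2n.
have E1 : 2 ^ (2 * t) = 4 ^ t by rewrite expnM.
have E2 : 2 ^ (2 * t).+1 = 2 * 4 ^ t by rewrite expnS E1.
have E3 : 2 ^ (2 * t).+2 = 4 * 4 ^ t by rewrite expnS E2; lia.
rewrite E3 E2 expnS.
have -> : F t + 4 * 4 ^ t * x = x * (4 * 4 ^ t) + F t by lia.
rewrite modnMDl modn_small; last by lia.
rewrite /absdiff; move: (F t) (4 ^ t) h3 P0 => a P; clear; lia.
Qed.

Definition Ds n := [seq d i n | i <- iota 1 (up_log 2 n)].

Lemma d_le i n : d i n <= 2 ^ i.-1.
Proof. exact: leq_subr. Qed.

Lemma d_big i n : 1 <= i -> n <= 2 ^ i.-1 -> d i n = n.
Proof.
move=> hi hn.
have h2 : n < 2 ^ i.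
  apply: (leq_ltn_trans hn); rewrite ltn_exp2l //; lia.
rewrite /d modn_small // /absdiff.
have -> : n - 2 ^ i.-1 = 0 by apply/eqP; rewrite subn_eq0.
by rewrite add0n subKn.
Qed.

Lemma k_bounds n : 2 <= n -> 2 ^ (up_log 2 n).-1 < n <= 2 ^ up_log 2 n.
Proof. by move=> hn; apply: up_log_bounds. Qed.

Lemma k_le n : up_log 2 n <= n.
Proof. apply: up_log_min => //; exact: ltnW (ltn_expl n (leqnn 2)). Qed.

Lemma k_gt0 n : 2 <= n -> 0 < up_log 2 n.
Proof. by move=> hn; rewrite up_log_gt0 hn. Qed.

Lemma notin_Ds n : 2 <= n -> n \notin Ds n.
Proof.
move=> hn; apply/mapP => -[i]; rewrite mem_iota => /andP [h1 h2] E.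
have := d_le i n; rewrite -E => h.
have := k_bounds n hn => /andP [hk _].
have : 2 ^ i.-1 <= 2 ^ (up_log 2 n).-1 by rewrite leq_exp2l //; lia.
lia.
Qed.

Lemma c_eq n : 2 <= n -> c n = (size (undup (Ds n))).+1.
Proof.
move=> hn.
have [hk1 hk2] := andP (k_bounds n hn).
have hkn := k_le n.
have mem : forall x, (x \in [seq d i n | i <- iota 1 n.+1]) = (x \in n :: Ds n).
  move=> x; apply/idP/idP.
    move/mapP => [i]; rewrite mem_iota => /andP [h1 h2] ->.
    case: (leqP i (up_log 2 n)) => hik.
      rewrite inE; apply/orP; right; apply/mapP; exists i => //; rewrite mem_iota; lia.
    rewrite d_big ?inE ?eqxx //.
    apply: (leq_trans hk2); rewrite leq_exp2l //; lia.
  rewrite inE => /orP [/eqP -> | /mapP [i hi ->]].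
    apply/mapP; exists n.+1; last by rewrite d_large.
    by rewrite mem_iota; lia.
  apply/mapP; exists i => //; move: hi; rewrite !mem_iota; lia.
rewrite /c (perm_size (uniq_perm (undup_uniq _) (undup_uniq (n :: Ds n)) _)).
  by rewrite /= (negbTE (notin_Ds n hn)).
by move=> x; rewrite !mem_undup mem.
Qed.

Lemma sideE k n j : 1 <= j <= k -> 2 * side1 k n j + d (k - j + 1) n = n.
Proof.
move=> hj; have -> : k - j + 1 = (k - j).+1 by lia.
exact: (key (k - j) n).
Qed.

Lemma h_eq n : 2 <= n -> h n = size (undup (Ds n)).
Proof.
move=> hn.
have [hk1 hk2] := andP (k_bounds n hn).
rewrite /h ifF; last by apply/negbTE; rewrite -leqNgt.
set L := filter _ _.
have Luniq : uniq L.
  rewrite filter_uniq // allpairs_uniq ?iota_uniq //.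
  by move=> [a b] [a' b'] _ _ /= [-> ->].
rewrite -(size_map (fun p => p.1 - p.2)).
apply: perm_size; apply: uniq_perm; last first.
- move=> x; rewrite mem_undup; apply/idP/idP.
    move/mapP => [[a b]]; rewrite mem_filter => /andP [hp _] -> /=.
    move: hp; rewrite /HCBP /= => /and4P [/eqP hab hba hb /hasP [j]].
    rewrite mem_iota => hj /orP [] /andP [/eqP hs /eqP hs'];
      have hk := sideE (up_log 2 n) n j hj; rewrite /Ds; apply/mapP; exists (up_log 2 n - j + 1);
      try (rewrite mem_iota; clear -hj; lia); clear -hk hs hs' hab hba; lia.
  rewrite /Ds; move/mapP => [i]; rewrite mem_iota => hi ->.
  set j := up_log 2 n - i + 1.
  have hj : 1 <= j <= up_log 2 n by rewrite /j; lia.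
  have := sideE (up_log 2 n) n j hj; have -> : up_log 2 n - j + 1 = i by rewrite /j; lia.
  set s := side1 _ _ _ => hs.
  have hdn : d i n < n.
    apply: (leq_ltn_trans (d_le i n)); apply: (leq_ltn_trans _ hk1).
    rewrite leq_exp2l //; lia.
  apply/mapP; exists (n - s, s); last by rewrite /=; lia.
  rewrite mem_filter; apply/andP; split; last first.
    apply/allpairsP; exists (n - s, s); split => //; rewrite mem_iota /=; lia.
  rewrite /HCBP /=; apply/and4P; split; try (apply/eqP; lia); try lia.
  apply/hasP; exists j; first by rewrite mem_iota; lia.
  by rewrite -/s eqxx /=; apply/orP; right; rewrite eqxx.
- exact: undup_uniq.
- rewrite map_inj_in_uniq // => -[a b] [a' b'].
  rewrite !mem_filter /HCBP /= => /andP [/and4P [/eqP h1 h2 _ _] _] /andP [/and4P [/eqP h1' h2' _ _] _] E.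
  have -> : a = a' by lia.
  have -> : b = b' by lia.
  by [].
Qed.

Lemma Ds_coinc n p q : 1 <= p < q -> q <= up_log 2 n -> d p n = d q n ->
  size (undup (Ds n)) <= (up_log 2 n).-1.
Proof.
move=> hpq hq E.
have U := iota_uniq 1 (up_log 2 n).
have sub : {subset undup (Ds n) <= map (d^~ n) (rem q (iota 1 (up_log 2 n)))}.
  move=> x; rewrite mem_undup => /mapP [i hi ->].
  case: (i =P q) => [->|ne].
    apply/mapP; exists p; last by rewrite E.
    rewrite mem_rem_uniq // inE; apply/andP; split; first by apply/eqP; lia.
    by rewrite mem_iota; lia.
  apply/mapP; exists i => //.
  rewrite mem_rem_uniq // inE; apply/andP; split => //; exact/eqP.
apply: (leq_trans (uniq_leq_size (undup_uniq _) sub)).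
by rewrite size_map size_rem ?size_iota // mem_iota; lia.
Qed.

Lemma upper n : 3 <= n -> size (undup (Ds n)) <= (up_log 2 n).-1.
Proof.
move=> hn.
have hn2 : 2 <= n by lia.
have [hk1 hk2] := andP (k_bounds n hn2).
case: (dsmall n) => [E | [h4 E]].
  apply: (Ds_coinc n 1 2) => //.
  case: (leqP 2 (up_log 2 n)) => // hk.
  have : 2 ^ up_log 2 n <= 2 ^ 1 by rewrite leq_exp2l //; lia.
  lia.
apply: (Ds_coinc n 2 3) => //.
have h6 : 6 <= n.
  move: h4 hn; clear; move=> h4 hn.
  case: (leqP 6 n) => // hlt.
  have : n = 3 \/ n = 4 \/ n = 5 by lia.
  by case=> [|[|]] E; rewrite E in h4.
case: (leqP 3 (up_log 2 n)) => // hk.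
have : 2 ^ up_log 2 n <= 2 ^ 2 by rewrite leq_exp2l //; lia.
lia.
Qed.

Lemma Fk j : 0 < j -> up_log 2 (F j) = j.*2.+1.
Proof.
move=> hj; apply: up_log_eq => //.
have h3 := F3 j; rewrite expnS in h3.
have E1 : 2 ^ j.*2 = 4 ^ j by rewrite -mul2n expnM.
have E2 : 2 ^ j.*2.+1 = 2 * 4 ^ j by rewrite expnS E1.
have h4 : 4 <= 4 ^ j.
  by rewrite -[X in X <= _]expn1 leq_exp2l.
rewrite E2 E1; move: (F j) (4 ^ j) h3 h4 => a P; clear; lia.
Qed.

Lemma Fstep j i : 2 <= i -> i < j.*2.+1 -> d i (F j) < d i.+1 (F j).
Proof.
move=> h2 hi; have := odd_double_half i.
case: (odd i) => /= E.
  set m := i./2 in E.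
  have hm1 : 1 <= m by lia.
  have hmj : m <= j by lia.
  rewrite -E add1n dodd // deven //.
  have h3 := F3 m; rewrite expnS in h3.
  have h4 : 4 <= 4 ^ m by rewrite -[X in X <= _]expn1 leq_exp2l.
  move: (F m) (4 ^ m) h3 h4 => a P; clear; lia.
set m := i./2 in E.
case Em : m => [|m']; first by rewrite Em in E; lia.
have hmj : m'.+1 <= j by lia.
have -> : i = m'.*2.+2 by rewrite -E Em add0n.
rewrite deven; last by lia.
have -> : (m'.*2.+2).+1 = (m'.+1).*2.+1 by rewrite doubleS.
rewrite dodd //.
have h3 := F3 m'; rewrite expnS in h3.
rewrite /= expnS.
move: (F m') (4 ^ m') h3 => a P; clear; lia.
Qed.

Lemma Fmono j a b : 2 <= a -> a < b -> b <= j.*2.+1 -> d a (F j) < d b (F j).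
Proof.
move=> ha; elim: b => [//|b IH] hab hb.
case: (ltngtP a b) => h.
- apply: (ltn_trans (IH h (ltnW hb))); apply: Fstep => //; lia.
- lia.
- rewrite -h; apply: Fstep => //; lia.
Qed.

Lemma Dsize j : 0 < j -> size (undup (Ds (F j))) = j.*2.
Proof.
move=> hj; rewrite /Ds Fk //.
have -> : iota 1 j.*2.+1 = 1 :: iota 2 j.*2 by [].
rewrite map_cons /=.
have e1 : d 1 (F j) = d 2 (F j).
  have := dodd 0 j (leq0n j); have := deven 0 j (leq0n j); by move=> /= -> ->.
rewrite ifT; last first.
  apply/mapP; exists 2 => //; rewrite mem_iota; lia.
rewrite undup_id ?size_map ?size_iota //.
rewrite map_inj_in_uniq ?iota_uniq // => a b; rewrite !mem_iota => ha hb E.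
case: (ltngtP a b) => // h; exfalso.
- have := Fmono j a b; rewrite E ltnn; move=> H; have : false by apply: H; lia. by [].
- have := Fmono j b a; rewrite E ltnn; move=> H; have : false by apply: H; lia. by [].
Qed.

Theorem mainTheorem12 :
  (forall n : nat, 1 <= n <= 2 ->
     c n = up_log 2 n + 1 /\ h n = up_log 2 n) /\
  (forall n : nat, 3 <= n ->
     c n <= up_log 2 n /\ h n <= up_log 2 n - 1) /\
  (forall N : nat, exists n : nat,
     [/\ N <= n, 3 <= n, c n = up_log 2 n & h n = up_log 2 n - 1]).
Proof.
split.
  move=> n hn; have : n = 1 \/ n = 2 by lia.
  by case=> ->; split; vm_compute.
split.
  move=> n hn; have hn2 : 2 <= n by lia.
  rewrite c_eq // h_eq //; have := upper n hn; have := k_gt0 n hn2; lia.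
move=> N; exists (F N.+1).
have hF : N.+1 < F N.+1.
  elim: N.+1 => [//|t IH] /=; lia.
have hF3 : 3 <= F N.+1.
  have : 0 < F N by case: N {hF} => [|N] //=; lia.
  rewrite /=; lia.
rewrite c_eq ?h_eq ?Dsize ?Fk //; try lia.
split; lia.
Qed.
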